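(* Let $q=p^n$ be a prime power and $d$ a positive divisor of $q-1$. Then $G(q,d)$ has a GI-automorphism (equivalently, has a GI-extension) if and only if there exists an integer $l\ge 0$ with $p^l\equiv -1 \pmod d$.
   Context: $G(q,d)$ is the group of affine maps $\{x\mapsto ax+b:\ a,b\in\mathbb{F}_q,\ a^d=1\}$ under composition; equivalently $G(q,d)\cong C_p^n\rtimes C_d$, where $C_p^n$ is the additive group of $\mathbb{F}_q$ and $C_d\le\mathbb{F}_q^\times$ acts by multiplication. A GI-automorphism of a group $G$ is an automorphism $\sigma$ such that $G$ is generated by $\{g\in G:\sigma(g)=g^{-1}\}$. Given a group $G'$ with a normal subgroup $G$ of index $2$, $G'$ is a GI-extension of $G$ if $G'$ is generated by involutions not contained in $G$. *)

(* Defs.v *)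
From HB Require Import structures.
From mathcomp Require Import all_boot all_order all_algebra all_fingroup all_solvable all_field.
Set Implicit Arguments. Unset Strict Implicit. Unset Printing Implicit Defensive.
Import GRing.Theory.

(* G(q,d) realised concretely inside the permutation group of the finite
   field F (|F| = q): the set of affine permutations x |-> a x + b with
   a, b in F and a^d = 1.  (It is a subgroup of {perm F}; composition order
   of perms is irrelevant for the set.) *)
Definition Gqd (F : finFieldType) (d : nat) : {set {perm F}} :=
  [set s : {perm F} | [exists a : F, exists b : F,
      (a ^+ d == 1)%R && [forall x : F, s x == (a * x + b)%R]]].

Definition GI_automorphism (gT : finGroupType) (G : {set gT}) (sigma : {perm gT}) : Prop :=
  sigma \in Aut G /\ <<[set g in G | sigma g == g^-1]>>%g = G.

Definition has_GI_automorphism (gT : finGroupType) (G : {set gT}) : Prop :=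
  exists sigma : {perm gT}, GI_automorphism G sigma.

(* Main.v *)
Require Import Defs.
From HB Require Import structures.
From mathcomp Require Import all_boot all_order all_algebra all_fingroup all_solvable all_field.
From mathcomp Require Import ring.

Module GIHelpers.
Set Implicit Arguments. Unset Strict Implicit. Unset Printing Implicit Defensive.
Import GRing.Theory.
Local Open Scope ring_scope.

Section Affine.
Variable F : finFieldType.
Implicit Types (s t : {perm F}) (a b x : F).

Definition lin s : F := s 1 - s 0.
Definition tr s : F := s 0.
Definition affp s := [forall x, s x == lin s * x + tr s].

Lemma affpP s : reflect (forall x, s x = lin s * x + tr s) (affp s).
Proof. by apply: (iffP forallP) => H x; apply/eqP. Qed.

Lemma aff_inj a b : a != 0 -> injective (fun x => a * x + b).
Proof. by move=> a0 x y /addIr /(mulfI a0). Qed.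

Definition aff a b : {perm F} :=
  if (a != 0) =P true is ReflectT h then perm (@aff_inj a b h) else 1%g.

Lemma affE a b x : a != 0 -> aff a b x = a * x + b.
Proof. by rewrite /aff; case: eqP => // h _; rewrite permE. Qed.

Lemma lin_aff a b : a != 0 -> lin (aff a b) = a.
Proof. by move=> h; rewrite /lin !affE // mulr1 mulr0 add0r addrK. Qed.
Lemma tr_aff a b : a != 0 -> tr (aff a b) = b.
Proof. by move=> h; rewrite /tr affE // mulr0 add0r. Qed.

Lemma affp_aff a b : a != 0 -> affp (aff a b).
Proof. by move=> h; apply/affpP => x; rewrite lin_aff // tr_aff // affE. Qed.

Lemma affp_eq s : affp s -> s = aff (lin s) (tr s).
Proof.
move=> /affpP h; have l0 : lin s != 0.
  apply/eqP => l0; have := h 1; rewrite l0 mul0r add0r /tr => e.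
  by have := perm_inj e; move/eqP; rewrite oner_eq0.
by apply/permP => x; rewrite affE // h.
Qed.

Lemma affp_lin0 s : affp s -> lin s != 0.
Proof.
move=> /affpP h; apply/eqP => l0; have := h 1; rewrite l0 mul0r add0r /tr => e.
by have := perm_inj e; move/eqP; rewrite oner_eq0.
Qed.

Lemma affpM s t : affp s -> affp t ->
  [/\ affp (s * t)%g, lin (s * t)%g = lin s * lin t & tr (s * t)%g = lin t * tr s + tr t].
Proof.
move=> /affpP hs /affpP ht.
have e x : (s * t)%g x = (lin s * lin t) * x + (lin t * tr s + tr t).
  by rewrite permM hs ht; ring.
have el : lin (s * t)%g = lin s * lin t by rewrite /lin !e mulr1 mulr0 add0r addrK.
have et : tr (s * t)%g = lin t * tr s + tr t by rewrite /tr e mulr0 add0r.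
by split => //; apply/affpP => x; rewrite e el et.
Qed.

Lemma affp1 : affp 1%g.
Proof. by apply/affpP => x; rewrite /lin /tr !perm1 subr0 mul1r addr0. Qed.
Lemma lin1 : lin 1%g = 1.
Proof. by rewrite /lin !perm1 subr0. Qed.

Lemma affpV s : affp s -> affp s^-1 /\ lin s^-1 = (lin s)^-1.
Proof.
move=> hs; have l0 := affp_lin0 hs.
have h2 : affp (aff (lin s)^-1 (- ((lin s)^-1 * tr s))) by apply: affp_aff; rewrite invr_eq0.
have e : s^-1%g = aff (lin s)^-1 (- ((lin s)^-1 * tr s)).
  apply/permP => x; rewrite affE ?invr_eq0 //.
  apply: (@perm_inj _ s); rewrite permKV; move/affpP: hs ->.
  by rewrite mulrDr mulrA divff // mul1r mulrN mulrA divff // mul1r addrNK.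
by rewrite e; split => //; rewrite lin_aff // invr_eq0.
Qed.

Lemma affV a b : a != 0 -> (aff a b)^-1%g = aff a^-1 (- (a^-1 * b)).
Proof.
move=> a0; apply/permP => x; rewrite affE ?invr_eq0 //.
apply: (@perm_inj _ (aff a b)); rewrite permKV affE //.
by rewrite mulrDr mulrA divff // mul1r mulrN mulrA divff // mul1r addrNK.
Qed.

Variable d : nat.
Hypothesis d0 : (0 < d)%N.

Lemma memG s : (s \in Gqd F d) = affp s && (lin s ^+ d == 1).
Proof.
apply/idP/idP.
  rewrite inE => /existsP[a /existsP[b /andP[ad /forallP h]]].
  have e x : s x = a * x + b by apply/eqP.
  have la : lin s = a by rewrite /lin !e mulr1 mulr0 add0r addrK.
  by rewrite la ad andbT; apply/affpP => x; rewrite e la /tr e mulr0 add0r.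
move=> /andP[/affpP h hd]; rewrite inE; apply/existsP; exists (lin s).
by apply/existsP; exists (tr s); rewrite hd; apply/forallP => x; rewrite h.
Qed.

Lemma Gqd_group_set : group_set (Gqd F d).
Proof.
apply/group_setP; split; first by rewrite memG affp1 lin1 expr1n eqxx.
move=> s t; rewrite !memG => /andP[hs ls] /andP[ht lt].
by case: (affpM hs ht) => -> -> _; rewrite exprMn (eqP ls) (eqP lt) mulr1 eqxx.
Qed.

Canonical Gqd_group := group Gqd_group_set.

End Affine.

Section Gal.
Variables (F : finFieldType) (p : nat).
Hypothesis pcharFp : p \in [pchar F].
Let L := pPrimeCharType pcharFp.

Variables (z : F) (tau : F -> F).
Hypothesis tauD : forall x y, tau (x + y) = tau x + tau y.
Hypothesis tau_inj : injective tau.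
Hypothesis tauz : forall x, tau (z * x) = z^-1 * tau x.

Lemma tau0 : tau 0 = 0.
Proof. have h := tauD 0 0; rewrite addr0 in h; apply: (@addrI _ (tau 0)); by rewrite addr0 -h. Qed.

Lemma tauMn x k : tau (x *+ k) = tau x *+ k.
Proof. by elim: k => [|k IH]; rewrite ?mulr0n ?tau0 // !mulrS tauD IH. Qed.

Lemma tauX x i : tau (z ^+ i * x) = z ^- i * tau x.
Proof.
elim: i => [|i IH]; first by rewrite !expr0 invr1 !mul1r.
by rewrite exprS -mulrA tauz IH mulrA -invfM -exprS.
Qed.

Lemma tau_poly (P : {poly L}) x : P \is a polyOver 1%VS ->
  tau ((P.[z : L] : L) * x) = (P.[(z^-1 : F) : L] : L) * tau x.
Proof.
move=> /polyOverP HP; rewrite !horner_coef !mulr_suml.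
rewrite (big_morph tau tauD tau0); apply: eq_bigr => i _.
have /vlineP[a ->] := HP i.
rewrite -!mulrA.
change ((a *: (1 : L)) * ((z : L) ^+ i * x)) with ((a%:R * 1 : F) * (z ^+ i * x)).
change ((a *: (1 : L)) * ((z^-1 : L) ^+ i * tau x)) with ((a%:R * 1 : F) * (z^-1 ^+ i * tau x)).
by rewrite !mul1r !mulr_natl tauMn tauX exprVn.
Qed.


Lemma tau_conj_exists : exists j, z^-1 = z ^+ (p ^ j).
Proof.
have pr : prime p := pcharf_prime pcharFp.
pose P := minPoly 1 (z : L).
have r1 : root P ((z^-1 : F) : L).
  have h := tau_poly 1 (minPolyOver 1 (z : L)).
  rewrite (rootP (root_minPoly 1 (z : L))) mul0r tau0 in h.
  apply/rootP; apply/eqP; move: h => /esym/eqP; rewrite mulf_eq0 => /orP[] // /eqP t1.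
  by have := tau_inj (etrans t1 (esym tau0)); move/eqP; rewrite oner_eq0.
have [galL] := and3P (finField_galois (subvf (1%VS : {vspace L}))).
move=> _ /(normalField_root_minPoly (subvf _)) - /(_ (z : L) _ (memvf _) r1) [x galx xz].
have [alpha /eqP gen Dalpha] := finField_galois_generator (subvf (1%AS : {subfield L})).
move: galx; rewrite gen => /cycleP[j xj]; rewrite xj in xz.
exists j; rewrite -xz; clear xj xz.
elim: j => [|j IH]; first by rewrite expg0 gal_id expn0 expr1.
rewrite expgSr galM ?memvf // IH Dalpha ?memvf // card_Fp // dimv1 expn1.
by rewrite expnSr exprM.
Qed.
End Gal.

Section Trans.
Variable F : finFieldType.
Implicit Types (s : {perm F}) (b c : F).
Definition tp b := aff 1 b.

Lemma tpE b x : tp b x = x + b.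
Proof. by rewrite /tp affE ?oner_neq0 // mul1r. Qed.

Lemma affp_tp b : affp (tp b).
Proof. exact: affp_aff (oner_neq0 _). Qed.
Lemma lin_tp b : lin (tp b) = 1.
Proof. exact: lin_aff (oner_neq0 _). Qed.
Lemma tr_tp b : tr (tp b) = b.
Proof. exact: tr_aff (oner_neq0 _). Qed.

Lemma tpD b c : tp (b + c) = (tp b * tp c)%g.
Proof. by apply/permP => x; rewrite permM !tpE addrA. Qed.
Lemma tp0 : tp 0 = 1%g.
Proof. by apply/permP => x; rewrite tpE perm1 addr0. Qed.
Lemma tpMn b k : (tp b ^+ k)%g = tp (b *+ k).
Proof.
elim: k => [|k IH]; first by rewrite expg0 mulr0n tp0.
by rewrite expgSr IH mulrSr tpD.
Qed.
Lemma tp_inj : injective tp.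
Proof. by move=> b c /permP /(_ 0); rewrite !tpE !add0r. Qed.

Lemma conj_tp s b : affp s -> (s^-1 * tp b * s)%g = tp (lin s * b).
Proof.
move=> /affpP hs; apply/permP => x; rewrite !permM tpE hs tpE.
have := hs (s^-1%g x); rewrite permKV => e.
by rewrite mulrDr addrAC -e.
Qed.

Lemma affpX s k : affp s -> affp (s ^+ k)%g /\ lin (s ^+ k)%g = lin s ^+ k.
Proof.
move=> hs; elim: k => [|k [h1 h2]]; first by rewrite expg0 expr0 lin1; split=> //; exact: affp1.
by rewrite expgSr; case: (affpM h1 hs) => a b _; split=> //; rewrite b h2 exprSr.
Qed.

End Trans.

Lemma root1_coprime (F : finFieldType) (a : F) p d : (0 < d)%N -> coprime p d ->
  a ^+ p = 1 -> a ^+ d = 1 -> a = 1.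
Proof.
move=> d0 cop ap ad; have [m pm md] := prim_order_exists d0 ad.
have mp : (m %| p)%N by rewrite (prim_order_dvd pm) ap.
have m1 : m = 1%N by apply/eqP; rewrite -dvdn1 -(eqP cop) dvdn_gcd mp md.
by move: pm; rewrite m1 => /prim_expr_order; rewrite expr1.
Qed.

Lemma prim_root_exists (F : finFieldType) d : (0 < d)%N -> (d %| #|F|.-1)%N ->
  exists z : F, d.-primitive_root z.
Proof.
move=> d0 dd.
pose rs := [seq x <- enum F | x != 0].
have q0 : (0 < #|F|.-1)%N by rewrite -subn1 subn_gt0 finNzRing_gt1.
have szrs : size rs = #|F|.-1.
  rewrite /rs -(cardC1 (0:F)) cardE /enum_mem -filter_predI; apply: congr1.
  by apply: eq_filter => x /=; rewrite !inE andbT.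
have : has (#|F|.-1).-primitive_root rs.
  apply: has_prim_root => //; last by rewrite szrs.
    apply/allP => x; rewrite mem_filter => /andP[x0 _]; apply/unity_rootP.
    by apply: (mulIf x0); rewrite mul1r -exprSr (ltn_predK (finNzRing_gt1 F)) expf_card.
  by rewrite filter_uniq // enum_uniq.
move=> /hasP[g _ pg]; exists (g ^+ (#|F|.-1 %/ d)); exact: dvdn_prim_root.
Qed.

Section Forward.
Variables (F : finFieldType) (p n d : nat).
Hypotheses (hp : prime p) (hn : (0 < n)%N) (hq : #|F| = (p ^ n)%N) (hd : (0 < d)%N) (hdq : (d %| p ^ n - 1)%N).
Let G := Gqd F d.
Let pchar : p \in [pchar F] := card_finPcharP hq hp.

Lemma forward (sg : {perm {perm F}}) : GI_automorphism G sg ->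
  exists l : nat, (p ^ l + 1 = 0 %[mod d])%N.
Proof.
move=> [AutS gen].
have sM : {in G &, {morph sg : x y / (x * y)%g}} by apply/morphicP; exact: Aut_morphic AutS.
have sG g : g \in G -> sg g \in G.
  by move=> Gg; move: AutS; rewrite inE => /andP[pon _]; rewrite (perm_closed _ pon).
have G1 : (1%g : {perm F}) \in G by exact: (group1 (Gqd_group F d)).
have GM g h : g \in G -> h \in G -> (g * h)%g \in G by move=> *; exact: (@groupM _ (Gqd_group F d)).
have GV g : g \in G -> (g^-1)%g \in G by move=> Gg; rewrite (groupV (Gqd_group F d)).
have s1 : sg 1%g = 1%g.
  have := sM _ _ G1 G1; rewrite mulg1 => /esym e.
  by apply: (mulgI (sg 1%g)); rewrite e mulg1.
have sV g : g \in G -> sg (g^-1)%g = (sg g)^-1%g.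
  move=> Gg; apply: (mulgI (sg g)); rewrite -sM ?GV // mulgV s1 mulgV //.
have sX g k : g \in G -> sg (g ^+ k)%g = (sg g ^+ k)%g.
  move=> Gg; elim: k => [|k IH]; first by rewrite !expg0 s1.
  by rewrite !expgSr sM ?IH // (@groupX _ (Gqd_group F d)).
have Gtp b : tp b \in G by rewrite memG // affp_tp lin_tp expr1n eqxx.
have cop : coprime p d.
  apply: (coprime_dvdr hdq); rewrite prime_coprime //; apply/negP => pd.
  have : (p %| p ^ n - (p ^ n - 1))%N by rewrite dvdn_sub // dvdn_exp.
  by rewrite subKn ?expn_gt0 ?prime_gt0 // dvdn1 => /eqP p1; move: hp; rewrite p1.
pose tau b := tr (sg (tp b)).
have stp b : sg (tp b) = tp (tau b).
  have := sG _ (Gtp b); rewrite memG => /andP[af ld].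
  have lp : lin (sg (tp b)) ^+ p = 1.
    by rewrite -(affpX p af).2 -sX ?Gtp // tpMn -mulr_natr (pcharf0 pchar) mulr0 tp0 s1 lin1.
  have l1 := root1_coprime hd cop lp (eqP ld).
  by rewrite {1}(affp_eq af) l1.
have tauD b c : tau (b + c) = tau b + tau c.
  by apply: tp_inj; rewrite -stp tpD sM ?Gtp // !stp -tpD.
have tau_inj : injective tau.
  by move=> b c e; apply: tp_inj; apply: (perm_inj (s := sg)); rewrite !stp e.
pose S := [set g in G | lin (sg g) * lin g == 1].
have Sgrp : group_set S.
  apply/group_setP; split; first by apply/setIdP; rewrite G1 s1 lin1 mulr1 eqxx.
  move=> x y /setIdP[Gx ex] /setIdP[Gy ey]; apply/setIdP; split; first exact: GM.
  rewrite sM //.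
  have := sG _ Gx; rewrite memG => /andP[ax _]; have := sG _ Gy; rewrite memG => /andP[ay _].
  move: Gx Gy; rewrite !memG => /andP[ax' _] /andP[ay' _].
  case: (affpM ax ay) => _ -> _; case: (affpM ax' ay') => _ -> _.
  by rewrite mulrACA (eqP ex) (eqP ey) mulr1.
have GS : G \subset S.
  have : (<<[set g in G | sg g == (g^-1)%g]>> \subset group Sgrp)%g.
    rewrite gen_subG; apply/subsetP => g /setIdP[Gg /eqP e].
    apply/setIdP; rewrite Gg e; split=> //; move: Gg; rewrite memG => /andP[ag _].
    have [av _] := affpV ag; case: (affpM av ag) => _ <- _.
    by rewrite mulVg lin1.
  by rewrite gen.
have [z pz] : exists z : F, d.-primitive_root z.
  by apply: prim_root_exists => //; rewrite hq -subn1.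
have z0 : z != 0.
  by apply/eqP => z0; have := prim_expr_order pz; rewrite z0 expr0n gtn_eqF //= => /eqP; rewrite eq_sym oner_eq0.
pose h := aff z 0.
have ah : affp h := affp_aff 0 z0.
have Gh : h \in G by rewrite memG ah lin_aff // prim_expr_order // eqxx.
have lh : lin (sg h) = z^-1.
  have := subsetP GS _ Gh; move=> /setIdP[_ /eqP]; rewrite lin_aff // => e.
  by rewrite -[lin _](mulfK z0) e mul1r.
have tauz b : tau (z * b) = z^-1 * tau b.
  apply: tp_inj; rewrite -stp -{1}(lin_aff 0 z0) -conj_tp //.
  rewrite sM ?GM ?GV ?Gtp // sM ?GV // sV // stp conj_tp ?lh //.
  by have := sG _ Gh; rewrite memG => /andP[].
have [j ej] := tau_conj_exists pchar tauD tau_inj tauz.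
exists j; apply/eqP; rewrite mod0n.
change (d %| p ^ j + 1)%N.
by rewrite (prim_order_dvd pz) exprD expr1 -ej mulVf.
Qed.
End Forward.

Section Backward.
Variables (F : finFieldType) (p d l : nat).
Hypotheses (pchar : p \in [pchar F]) (hd : (0 < d)%N) (hl : (p ^ l + 1 = 0 %[mod d])%N).
Let L := pPrimeCharType pchar.
Let m := (p ^ l)%N.

Lemma frobD (a b : F) : (a + b) ^+ m = a ^+ m + b ^+ m.
Proof. by apply: exprDn_pchar; rewrite pnatX pnatE ?pchar ?(pcharf_prime pchar). Qed.

Definition mus : seq L := [seq x <- enum F | x ^+ d == 1].
Let U : {vspace L} := <<mus>>%VS.

Lemma mem_mus (x : F) : ((x : L) \in mus) = (x ^+ d == 1).
Proof. by rewrite mem_filter mem_enum andbT. Qed.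

Lemma U_aspace : is_aspace U.
Proof.
rewrite /is_aspace has_algid1; last by apply: memv_span; rewrite mem_mus expr1n.
have A (u x : L) : u \in U -> x \in mus -> u * x \in U.
  move=> Uu mx.
  have sub : (<<map (amulr x) mus>> <= U)%VS.
    apply/span_subvP => y /mapP[z zm ->]; rewrite lfunE /=; apply: memv_span.
    move: zm mx; rewrite !mem_filter => /andP[/eqP z1 _] /andP[/eqP x1 _].
    by rewrite exprMn z1 x1 mulr1 eqxx /= -enumT mem_enum.
  by have := memv_img (amulr x) Uu; rewrite limg_span lfunE /= => /(subvP sub).
apply/prodvP => u v Uu Uv.
have sub : (<<map (amulr u) mus>> <= U)%VS.
  by apply/span_subvP => y /mapP[z zm ->]; rewrite lfunE /= mulrC; apply: A.
by rewrite mulrC; have := memv_img (amulr u) Uv; rewrite limg_span lfunE /= => /(subvP sub).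
Qed.

Definition K : {subfield L} := ASpace U_aspace.
Let LF := fieldOver K.
Let B := vbasis (fullv : {vspace LF}).
Let r := \dim (fullv : {vspace LF}).

Definition psi0 (x : F) : F := \sum_(i < r) (vsval (coord B i (x : LF)) : F) ^+ m * (B`_i : F).



Lemma vsvalM (u v : subvs_of K) : vsval (u * v) = vsval u * vsval v.
Proof. by []. Qed.
Lemma vsval1 : vsval (1 : subvs_of K) = 1.
Proof. by apply/eqP; rewrite algid_eq1 mem1v. Qed.
Lemma vsvalX (u : subvs_of K) k : vsval (u ^+ k) = vsval u ^+ k.
Proof. by elim: k => [|k IH]; rewrite ?expr0 ?vsval1 // !exprS vsvalM IH. Qed.

Lemma m_gt0 : (0 < m)%N.
Proof. by rewrite expn_gt0 prime_gt0 ?(pcharf_prime pchar). Qed.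

Lemma psi0D x y : psi0 (x + y) = psi0 x + psi0 y.
Proof.
rewrite /psi0 -big_split; apply: eq_bigr => i _ /=.
have -> : coord B i ((x + y : F) : LF) = coord B i (x : LF) + coord B i (y : LF).
  exact: (linearD (coord B i) (x : LF) (y : LF)).
by rewrite raddfD /= frobD mulrDl.
Qed.

Lemma psi0Z c x : (c : L) \in K -> psi0 (c * x) = c ^+ m * psi0 x.
Proof.
move=> cK; rewrite /psi0 mulr_sumr; apply: eq_bigr => i _ /=.
have -> : coord B i ((c * x : F) : LF) = Subvs cK * coord B i (x : LF).
  have -> : ((c * x : F) : LF) = Subvs cK *: (x : LF) by rewrite fieldOver_scaleE.
  exact: linearZ.
by rewrite vsvalM exprMn mulrA.
Qed.

Lemma psi0B (j : 'I_r) : psi0 (B`_j) = B`_j.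
Proof.
have fB : free B := basis_free (vbasisP _).
rewrite /psi0 (bigD1 j) //= big1 ?addr0 => [|i ij].
  by rewrite coord_free // eqxx vsval1 expr1n mul1r.
by rewrite coord_free // eq_sym (negPf ij) rmorph0 expr0n gtn_eqF ?m_gt0 // mul0r.
Qed.

Lemma psi0_eq0 x : psi0 x = 0 -> x = 0.
Proof.
move=> h.
have fB : free B := basis_free (vbasisP _).
have e : (psi0 x : LF) = \sum_(i < r) (coord B i (x : LF)) ^+ m *: (B`_i : LF).
  by rewrite /psi0; apply: eq_bigr => i _; rewrite fieldOver_scaleE vsvalX.
have c0 i : coord B i (x : LF) = 0.
  have := coord_sum_free (fun i => (coord B i (x : LF)) ^+ m) i fB.
  by rewrite -e h linear0 => /esym/eqP; rewrite expf_eq0 => /andP[_ /eqP].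
rewrite (coord_vbasis (memvf (x : LF))); apply: big1 => i _.
by rewrite c0 scale0r.
Qed.

Lemma psi0_inj : injective psi0.
Proof.
move=> x y e; apply/eqP; rewrite -subr_eq0; apply/eqP; apply: psi0_eq0.
have := psi0D (x - y) y; rewrite subrK e => h'.
by apply: (addIr (psi0 y)); rewrite add0r -h'.
Qed.



Lemma mus_K (x : F) : x ^+ d = 1 -> (x : L) \in K.
Proof. move=> x1; apply: memv_span; by rewrite mem_filter x1 eqxx /= mem_enum. Qed.

Lemma root_m (x : F) : x ^+ d = 1 -> x ^+ m = x^-1.
Proof.
move=> x1; have x0 : x != 0.
  by apply/eqP => x0; move: x1; rewrite x0 expr0n gtn_eqF // => /eqP; rewrite eq_sym oner_eq0.
apply: (mulIf x0); rewrite mulVf // -exprSr -addn1.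
have /dvdnP[k ->] : (d %| m + 1)%N by apply/eqP; rewrite hl mod0n.
by rewrite mulnC exprM x1 expr1n.
Qed.

Definition psi x := - psi0 x.
Lemma psiD x y : psi (x + y) = psi x + psi y.
Proof. by rewrite /psi psi0D opprD. Qed.
Lemma psiZ c x : (c : L) \in K -> psi (c * x) = c ^+ m * psi x.
Proof. by move=> cK; rewrite /psi psi0Z // mulrN. Qed.
Lemma psi_inj : injective psi.
Proof. by move=> x y /oppr_inj /psi0_inj. Qed.
Lemma psi0' : psi 0 = 0.
Proof. by have := psiZ 0 (mem0v K); rewrite mul0r expr0n gtn_eqF ?m_gt0 // mul0r. Qed.

Definition pf : {perm F} := perm psi_inj.

Lemma conj_pf a b : a ^+ d = 1 -> (aff a b ^ pf)%g = aff (a ^+ m) (psi b).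
Proof.
move=> a1; have a0 : a != 0.
  by apply/eqP => x0; move: a1; rewrite x0 expr0n gtn_eqF // => /eqP; rewrite eq_sym oner_eq0.
have am0 : a ^+ m != 0 by rewrite expf_neq0.
apply/permP => x; rewrite conjgE !permM affE // affE // {1}/pf permE psiD psiZ ?mus_K //.
by congr (_ * _ + _); have := permKV pf x; rewrite {1}/pf permE.
Qed.

Lemma pfN : pf \in ('N(Gqd F d))%g.
Proof.
rewrite inE; apply/subsetP => y; rewrite mem_conjg => Gy.
have := Gy; rewrite memG => /andP[ay ly].
rewrite -(conjgKV pf y) (affp_eq ay) conj_pf ?(eqP ly) //.
have l0 : lin (y ^ pf^-1)%g != 0 by apply: affp_lin0.
rewrite memG affp_aff ?expf_neq0 // lin_aff ?expf_neq0 //.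
by rewrite -exprM mulnC exprM (eqP ly) expr1n eqxx.
Qed.



Lemma psiB (j : 'I_r) : psi (B`_j) = - B`_j.
Proof. by rewrite /psi psi0B. Qed.

Lemma backward : has_GI_automorphism (Gqd F d).
Proof.
pose GG := Gqd_group F d.
pose sg := conj_aut GG pf.
exists sg; split; first exact: Aut_aut.
have sgE g : g \in Gqd F d -> sg g = (g ^ pf)%g.
  by move=> Gg; apply: norm_conj_autE => //; exact: pfN.
pose I := [set g in Gqd F d | sg g == (g^-1)%g].
apply/eqP; rewrite eqEsubset; apply/andP; split.
  by rewrite (@gen_subG _ _ GG); apply/subsetP => g /setIdP[].
pose H := (<<I>>)%G.
have nz (a : F) : a ^+ d = 1 -> a != 0.
  by move=> a1; have := expf_eq0 a d; rewrite a1 oner_eq0 hd /= => <-.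
have Ga (a b : F) : a ^+ d = 1 -> aff a b \in Gqd F d.
  by move=> a1; rewrite memG affp_aff ?nz // lin_aff ?nz // a1 eqxx.
have Ha (a : F) : a ^+ d = 1 -> aff a 0 \in H.
  move=> a1; apply: mem_gen; apply/setIdP; split; first exact: Ga.
  rewrite sgE ?Ga // conj_pf // root_m // psi0' affV ?nz //.
  by rewrite mulr0 oppr0.
have Gtp (b : F) : tp b \in Gqd F d by rewrite /tp Ga ?expr1n.
have P0 : tp 0 \in H by rewrite tp0 group1.
have PD (b c : F) : tp b \in H -> tp c \in H -> tp (b + c) \in H.
  by move=> hb hc; rewrite tpD groupM.
have PMn (b : F) k : tp b \in H -> tp (b *+ k) \in H.
  by move=> hb; rewrite -tpMn groupX.
have Pu (u b : F) : u ^+ d = 1 -> tp b \in H -> tp (u * b) \in H.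
  move=> u1 hb; have au : affp (aff u 0) by apply: affp_aff; exact: nz.
  by rewrite -{1}(lin_aff 0 (nz _ u1)) -conj_tp // !groupM ?groupV ?Ha.
have Psum (J : finType) (f : J -> F) : (forall j, tp (f j) \in H) -> tp (\sum_j f j) \in H.
  move=> hf; elim/big_ind: _ => //; exact: PD.
have PK (c b : F) : (c : L) \in K -> tp b \in H -> tp (c * b) \in H.
  move=> cK hb.
  have e := coord_span (X := in_tuple mus) cK.
  have -> : c * b = \sum_(i < size mus) ((((in_tuple mus)`_i : L) : F) * b) *+ coord (in_tuple mus) i c.
    rewrite {1}e mulr_suml; apply: eq_bigr => i _.
    by rewrite -mulr_natl mulrA.
  apply: Psum => i; apply: PMn; apply: Pu hb.
  have : (in_tuple mus)`_i \in mus by rewrite mem_nth // size_tuple.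
  by rewrite mem_filter => /andP[/eqP].
have PB (j : 'I_r) : tp ((B`_j)%R : F) \in H.
  apply: mem_gen; apply/setIdP; split; first exact: Gtp.
  rewrite sgE // /tp conj_pf ?expr1n // psiB affV ?oner_neq0 //.
  by rewrite invr1 mul1r.
have Pall (x : F) : tp x \in H.
  have -> : x = \sum_(j < r) (vsval (coord B j (x : LF)) : F) * (B`_j : F).
    rewrite {1}(coord_vbasis (memvf (x : LF))); apply: eq_bigr => j _.
    by rewrite fieldOver_scaleE.
  by apply: Psum => j; apply: PK; [exact: subvsP | exact: PB].
apply/subsetP => g Gg; have := Gg; rewrite memG => /andP[ag /eqP lg].
have -> : g = (aff (lin g) 0 * tp (tr g))%g.
  apply/permP => x; rewrite permM tpE affE ?nz //.
  by move/affpP: ag => ->; rewrite addr0.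
by rewrite groupM ?Ha ?Pall.
Qed.

End Backward.

End GIHelpers.

Theorem theorem3p6 (F : finFieldType) (p n d : nat)
    (hp : prime p) (hn : 0 < n) (hq : #|F| = p ^ n)
    (hd : 0 < d) (hdq : d %| p ^ n - 1) :
  has_GI_automorphism (Gqd F d) <-> exists l : nat, p ^ l + 1 = 0 %[mod d].
Proof.
split.
  by move=> [sg Hsg]; exact: (GIHelpers.forward hp hn hq hd hdq Hsg).
by move=> [l hl]; exact: (GIHelpers.backward (card_finPcharP hq hp) hd hl).
Qed.
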